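(* Let $P$ be a set of $n$ points in $\mathbb{R}^3$ lying above the $xy$-plane, let $c$ be a centerpoint of $P$, and let $T=\binom{P}{3}$ be the set of all triangles with vertices in $P$. Then for any point $r$ on the $xy$-plane, the segment $cr$ intersects at least $\Omega(n^3)$ triangles of $T$ (with an absolute constant in the $\Omega$).
   Context: A centerpoint of a finite set $P\subset\mathbb{R}^3$ is a point $c\in\mathbb{R}^3$ such that every closed halfspace containing $c$ contains at least $|P|/4$ points of $P$. *)

(* Defs.v *)
From HB Require Import structures.
From mathcomp Require Import all_boot all_order all_algebra.
From mathcomp Require Import reals.
Set Implicit Arguments. Unset Strict Implicit. Unset Printing Implicit Defensive.
Import Order.TTheory GRing.Theory Num.Theory.
Local Open Scope ring_scope.

Section Geometry.
Variable R : realType.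

Definition dot3 (u v : 'rV[R]_3) : R := \sum_(i < 3) u ord0 i * v ord0 i.

Definition zcoord (p : 'rV[R]_3) : R := p ord0 (inord 2).

Definition centerpoint (n : nat) (f : 'I_n -> 'rV[R]_3) (c : 'rV[R]_3) : Prop :=
  forall (u : 'rV[R]_3) (b : R), u != 0 -> b <= dot3 u c ->
    (n <= 4 * #|[set i : 'I_n | (b <= dot3 u (f i))%R]|)%N.

Definition in_conv_hull (n : nat) (f : 'I_n -> 'rV[R]_3) (S : {set 'I_n})
    (x : 'rV[R]_3) : Prop :=
  exists w : 'I_n -> R,
    [/\ forall i, 0 <= w i,
        forall i, i \notin S -> w i = 0,
        \sum_i w i = 1 &
        x = \sum_i w i *: f i].

Definition on_segment (c r x : 'rV[R]_3) : Prop :=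
  exists t : R, [/\ 0 <= t, t <= 1 & x = (1 - t) *: c + t *: r].

End Geometry.

(* Main.v *)
Require Import Defs.
From HB Require Import structures.
From mathcomp Require Import all_boot all_order all_algebra.
From mathcomp Require Import reals boolp.
From mathcomp Require Import zify ring lra.
Set Implicit Arguments. Unset Strict Implicit. Unset Printing Implicit Defensive.
Import Order.TTheory GRing.Theory Num.Theory.
Local Open Scope ring_scope.
Section Gordan.
Variable R : realType.

Definition dotv n (u w : 'rV[R]_n) : R := \sum_(i < n) u 0 i * w 0 i.
Definition tl n (w : 'rV[R]_n.+1) : 'rV[R]_n := \row_(i < n) w 0 (lift ord0 i).
Definition hd n (w : 'rV[R]_n.+1) : R := w 0 ord0.
Definition cns n (s : R) (u : 'rV[R]_n) : 'rV[R]_n.+1 :=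
  \row_(i < n.+1) (if unlift ord0 i is Some j then u 0 j else s).

Lemma dotv_cns n s (u : 'rV[R]_n) w : dotv (cns s u) w = s * hd w + dotv u (tl w).
Proof.
rewrite /dotv big_ord_recl /hd !mxE unlift_none; congr (_ + _).
by apply: eq_bigr => i _; rewrite !mxE liftK.
Qed.

Lemma hd_sum n (I : finType) (F : I -> 'rV[R]_n.+1) (l : I -> R) :
  hd (\sum_i l i *: F i) = \sum_i l i * hd (F i).
Proof. by rewrite /hd summxE; apply: eq_bigr => i _; rewrite mxE. Qed.

Lemma tl_sum n (I : finType) (F : I -> 'rV[R]_n.+1) (l : I -> R) :
  tl (\sum_i l i *: F i) = \sum_i l i *: tl (F i).
Proof.
apply/rowP => k; rewrite !mxE summxE [RHS]summxE.
by apply: eq_bigr => i _; rewrite !mxE.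
Qed.

Lemma row_hd_tl n (w : 'rV[R]_n.+1) : hd w = 0 -> tl w = 0 -> w = 0.
Proof.
move=> h0 t0; apply/rowP => k; rewrite mxE.
case: (unliftP ord0 k) => [j ->|->]; last exact: h0.
by have := congr1 (fun v : 'rV_n => v 0 j) t0; rewrite !mxE.
Qed.

Lemma sum_pred1_scale (I : finType) n (w : I -> 'rV[R]_n) p :
  \sum_i (i == p)%:R *: w i = w p.
Proof.
rewrite (bigD1 p) //= eqxx scale1r big1 ?addr0 // => i /negbTE ->.
by rewrite scale0r.
Qed.

Lemma sep_value (I : finType) (P N : pred I) (lo hi : I -> R) :
  (forall p q, P p -> N q -> lo q < hi p) ->
  exists s, (forall q, N q -> lo q < s) /\ (forall p, P p -> s < hi p).
Proof.
move=> H.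
case: (pickP N) => [q0 Nq0|N0]; case: (pickP P) => [p0 Pp0|P0].
- pose qm := [arg max_(q > q0 | N q) lo q]%O.
  pose pm := [arg min_(p < p0 | P p) hi p]%O.
  have Hq : forall q, N q -> lo q <= lo qm.
    by rewrite /qm; case: (arg_maxP lo Nq0) => i _ Hi q Nq; exact: Hi.
  have Hp : forall p, P p -> hi pm <= hi p.
    by rewrite /pm; case: (arg_minP hi Pp0) => i _ Hi p Pp; exact: Hi.
  have Nqm : N qm by rewrite /qm; case: (arg_maxP lo Nq0).
  have Ppm : P pm by rewrite /pm; case: (arg_minP hi Pp0).
  have Hm := H _ _ Ppm Nqm.
  exists ((lo qm + hi pm) / 2); split.
  + move=> q Nq; have := Hq q Nq; lra.
  + move=> p Pp; have := Hp p Pp; lra.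
- pose qm := [arg max_(q > q0 | N q) lo q]%O.
  have Hq : forall q, N q -> lo q <= lo qm.
    by rewrite /qm; case: (arg_maxP lo Nq0) => i _ Hi q Nq; exact: Hi.
  exists (lo qm + 1); split; last by move=> p; rewrite P0.
  move=> q Nq; have := Hq q Nq; lra.
- pose pm := [arg min_(p < p0 | P p) hi p]%O.
  have Hp : forall p, P p -> hi pm <= hi p.
    by rewrite /pm; case: (arg_minP hi Pp0) => i _ Hi p Pp; exact: Hi.
  exists (hi pm - 1); split; first by move=> q; rewrite N0.
  move=> p Pp; have := Hp p Pp; lra.
- by exists 0; split => [q|p]; rewrite ?N0 ?P0.
Qed.

Theorem gordan n (I : finType) (w : I -> 'rV[R]_n) :
  (forall u, exists i, 0 <= dotv u (w i)) ->
  exists l : I -> R, [/\ (forall i, 0 <= l i), (exists i, 0 < l i) &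
     \sum_i l i *: w i = 0].
Proof.
elim: n I w => [|n IHn] I w Hinf.
  have [i _] := Hinf 0.
  exists (fun k => (k == i)%:R); split.
  - by move=> k; rewrite ler0n.
  - by exists i; rewrite eqxx ltr01.
  - by apply/rowP => k; case: k.
pose h i := hd (w i).
pose valid (pq : I * I) :=
  ((h pq.1 == 0) && (pq.1 == pq.2)) || ((0 < h pq.1) && (h pq.2 < 0)).
pose J := {pq : I * I | valid pq}.
pose comb (pq : I * I) : 'rV[R]_n.+1 :=
  if h pq.1 == 0 then w pq.1 else (- h pq.2) *: w pq.1 + h pq.1 *: w pq.2.
pose b (j : J) := tl (comb (val j)).
have hd_comb : forall pq, valid pq -> hd (comb pq) = 0.
  move=> [p q]; rewrite /valid /comb /=.
  case: eqP => [hp0 _|_ _]; first exact: hp0.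
  by rewrite /hd !mxE -/(hd (w p)) -/(hd (w q)) -/(h p) -/(h q); ring.
have Hinf' : forall u, exists j : J, 0 <= dotv u (b j).
  move=> u; apply/not_existsP => Hall.
  have Hlt : forall j : J, dotv u (b j) < 0.
    by move=> j; rewrite ltNge; apply/negP => /(fun x => Hall j x).
  pose a i := dotv u (tl (w i)).
  have Hpq : forall p q, 0 < h p -> h q < 0 -> - a q / h q < - a p / h p.
    move=> p q hp hq.
    have vpq : valid (p, q) by rewrite /valid /= hp hq orbT.
    have := Hlt (exist _ (p, q) vpq); rewrite /b /comb /= (gt_eqF hp).
    rewrite /tl.
    have -> : dotv u (\row_i ((- h q) *: w p + h p *: w q) 0 (lift ord0 i)) =
       (- h q) * a p + h p * a q.
      rewrite /a /dotv !mulr_sumr -big_split /=; apply: eq_bigr => i _.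
      by rewrite !mxE; ring.
    move=> H0.
    rewrite ltr_pdivlMr // mulrAC ltr_ndivrMr //; nra.
  have [s [Hs1 Hs2]] := @sep_value I (fun p => 0 < h p) (fun q => h q < 0)
      (fun q => - a q / h q) (fun p => - a p / h p) Hpq.
  have [i Hi] := Hinf (cns s u).
  move: Hi; rewrite dotv_cns -/(h i) -/(a i) => Hi.
  case: (ltrgt0P (h i)) => hi.
  - have := Hs2 i hi; rewrite ltr_pdivlMr //; lra.
  - have := Hs1 i hi; rewrite ltr_ndivrMr //; lra.
  - have vii : valid (i, i) by rewrite /valid /= hi !eqxx.
    have := Hlt (exist _ (i, i) vii); rewrite /b /comb /= hi eqxx -/(a i).
    rewrite hi mulr0 add0r in Hi; lra.
have [l' [l'0 [j0 lj0] Hsum]] := IHn J b Hinf'.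
pose coef (i : I) (pq : I * I) : R :=
  if h pq.1 == 0 then (i == pq.1)%:R
  else (i == pq.1)%:R * (- h pq.2) + (i == pq.2)%:R * h pq.1.
have coef0 : forall i (j : J), 0 <= coef i (val j).
  move=> i [[p q] /= vpq]; rewrite /coef /=.
  case: eqP => [_|hp0]; first by rewrite ler0n.
  move: vpq; rewrite /valid /= => /orP[/andP[/eqP //]|/andP[hp hq]].
  apply: addr_ge0; apply: mulr_ge0; rewrite ?ler0n //; lra.
have combE : forall pq, \sum_i coef i pq *: w i = comb pq.
  move=> [p q]; rewrite /coef /comb /=.
  case: (h p == 0).
    exact: sum_pred1_scale.
  rewrite (eq_bigr (fun i => (- h q) *: ((i == p)%:R *: w i) + h p *: ((i == q)%:R *: w i))); last first.
    by move=> i _; rewrite scalerDl !scalerA (mulrC (- h q)) (mulrC (h p)).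
  by rewrite big_split /= -!scaler_sumr !sum_pred1_scale.
exists (fun i => \sum_j l' j * coef i (val j)); split.
- move=> i; apply: sumr_ge0 => j _; apply: mulr_ge0; [exact: l'0 | exact: coef0].
- exists (val j0).1; rewrite (bigD1 j0) //=.
  apply: (@lt_le_trans _ _ (l' j0 * coef (val j0).1 (val j0) + 0)).
    rewrite addr0; apply: mulr_gt0 => //.
    case: j0 lj0 => [[p q] /= vpq] _; rewrite /coef /=.
    case: eqP => [_|hp0]; first by rewrite eqxx ltr01.
    move: vpq; rewrite /valid /= => /orP[/andP[/eqP //]|/andP[hp hq]].
    rewrite eqxx mul1r; case: (p =P q) => [qp|_].
      by move: hp hq; rewrite qp; lra.
    by rewrite mul0r addr0; lra.
  rewrite lerD2l; apply: sumr_ge0 => j _; apply: mulr_ge0; [exact: l'0 | exact: coef0].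
- have -> : \sum_i (\sum_j l' j * coef i (val j)) *: w i =
            \sum_j l' j *: comb (val j).
    rewrite (eq_bigr (fun i => \sum_j (l' j * coef i (val j)) *: w i)); last first.
      by move=> i _; rewrite scaler_suml.
    rewrite exchange_big /=; apply: eq_bigr => j _.
    by rewrite -combE scaler_sumr; apply: eq_bigr => i _; rewrite scalerA.
  apply: row_hd_tl.
  + rewrite hd_sum big1 // => j _; rewrite hd_comb ?mulr0 //; exact: (svalP j).
  + by rewrite tl_sum.
Qed.

End Gordan.
Lemma subset_card_ex (T : finType) (A : {set T}) k :
  (k <= #|A|)%N -> exists2 B : {set T}, B \subset A & #|B| = k.
Proof.
elim: k => [|k IH] Hk; first by exists set0; rewrite ?sub0set ?cards0.
have [B BA cB] := IH (ltnW Hk).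
have : (0 < #|A :\: B|)%N by rewrite cardsD (setIidPr BA) cB subn_gt0.
case/card_gt0P => x; rewrite in_setD => /andP[xB xA].
exists (x |: B); first by rewrite subUset sub1set xA BA.
by rewrite cardsU1 xB cB.
Qed.

Section Cara.
Variable R : realType.
Variable n : nat.
Variable v : 'I_n -> 'rV[R]_3.
Variable d : 'rV[R]_3.

Definition suppf (b : 'I_n -> R) := [set j | b j != 0].

Definition cert (b : 'I_n -> R) (t : R) :=
  [/\ forall j, 0 <= b j, 0 <= t, (t != 0) \/ (exists j, b j != 0) &
      \sum_j b j *: v j = t *: d].

Definition matK (K : {set 'I_n}) : 'M[R]_(#|K|, 3) := \matrix_(i < #|K|) v (enum_val (A := K) i).

Definition extK (K : {set 'I_n}) (l : 'rV[R]_#|K|) (j : 'I_n) : R :=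
  \sum_(i < #|K|) (enum_val (A := K) i == j)%:R * l 0 i.

Lemma extK_sum (K : {set 'I_n}) (l : 'rV[R]_#|K|) : \sum_j extK l j *: v j = l *m matK K.
Proof.
apply/rowP => k; rewrite !mxE summxE.
rewrite (eq_bigr (fun j => \sum_(i < #|K|) (enum_val i == j)%:R * l 0 i * v j 0 k)); last first.
  by move=> j _; rewrite !mxE mulr_suml.
rewrite exchange_big /=; apply: eq_bigr => i _.
rewrite (bigD1 (enum_val i)) //= eqxx mul1r big1 ?addr0; last first.
  by move=> j /negbTE; rewrite eq_sym => ->; rewrite mul0r mul0r.
by rewrite !mxE.
Qed.

Lemma extK_out (K : {set 'I_n}) (l : 'rV[R]_#|K|) j : j \notin K -> extK l j = 0.
Proof.
move=> jK; rewrite /extK big1 // => i _.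
case: eqP => [ej|]; last by rewrite mul0r.
by move: jK; rewrite -ej enum_valP.
Qed.

Lemma extK_val (K : {set 'I_n}) (l : 'rV[R]_#|K|) i : extK l (enum_val i) = l 0 i.
Proof.
rewrite /extK (bigD1 i) //= eqxx mul1r big1 ?addr0 // => i' ne.
by rewrite (inj_eq enum_val_inj) (negbTE ne) mul0r.
Qed.

Lemma dep_vec (K : {set 'I_n}) : (\rank (matK K) < #|K|)%N ->
  exists g : 'I_n -> R, [/\ exists j, g j != 0, forall j, j \notin K -> g j = 0 &
     \sum_j g j *: v j = 0].
Proof.
move=> Hr.
have : kermx (matK K) != 0 by rewrite kermx_eq0 /row_free neq_ltn Hr.
case/rowV0Pn => l /sub_kermxP l0 lnz.
have [i li] : exists i, l 0 i != 0.
  case: (boolP [exists i, l 0 i != 0]) => [/existsP//|/existsPn H].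
  by move/negP: lnz; case; apply/eqP/rowP => i; rewrite mxE; exact/eqP/negPn/H.
exists (extK l); split.
- by exists (enum_val i); rewrite extK_val.
- by move=> j; apply: extK_out.
- by rewrite extK_sum l0.
Qed.

Lemma span_vec (K : {set 'I_n}) (x : 'rV[R]_3) : \rank (matK K) = 3 ->
  exists g : 'I_n -> R, (forall j, j \notin K -> g j = 0) /\ \sum_j g j *: v j = x.
Proof.
move=> Hr.
have : (x <= matK K)%MS by apply: submx_full; rewrite /row_full Hr.
case/submxP => D ->.
exists (extK D); split; first by move=> j; apply: extK_out.
by rewrite extK_sum.
Qed.


Lemma reduce b t g :
  cert b t -> (exists j, g j != 0) -> (forall j, b j = 0 -> g j = 0) ->
  \sum_j g j *: v j = 0 ->
  (t != 0 \/ exists2 j, b j != 0 & g j = 0) ->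
  exists b', [/\ cert b' t, suppf b' \subset suppf b & (#|suppf b'| < #|suppf b|)%N].
Proof.
move=> [b0 t0 nz Hs] [j0 gj0] gsupp g0 Hnp.
wlog gpos : g j0 gj0 gsupp g0 Hnp / 0 < g j0.
  move=> W; case: (ltrgt0P (g j0)) => [gp|gn|/eqP]; last by rewrite (negbTE gj0).
  - exact: (W g j0).
  - have h1 : (fun j => - g j) j0 != 0 by rewrite /= oppr_eq0.
    have h2 : forall j, b j = 0 -> (fun j => - g j) j = 0.
      by move=> j /gsupp /= ->; rewrite oppr0.
    have h3 : \sum_j (fun j => - g j) j *: v j = 0.
      rewrite (eq_bigr (fun j => - (g j *: v j))); last by move=> j _; rewrite scaleNr.
      by rewrite sumrN g0 oppr0.
    have h4 : t != 0 \/ exists2 j, b j != 0 & (fun j => - g j) j = 0.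
      case: Hnp => [->|[j bj gj]]; [by left|right; exists j => //=; by rewrite gj oppr0].
    have h5 : 0 < (fun j => - g j) j0 by rewrite /= oppr_gt0.
    exact: (W _ j0 h1 h2 h3 h4 h5).
pose jm := [arg min_(j < j0 | 0 < g j) (b j / g j)]%O.
have [Pjm Hjm] : 0 < g jm /\ forall j, 0 < g j -> b jm / g jm <= b j / g j.
  by rewrite /jm; case: (arg_minP (P := fun j => 0 < g j) (fun j => b j / g j) gpos).
set s := b jm / g jm.
have s0 : 0 <= s by apply: divr_ge0; [exact: b0 | exact: ltW].
pose b' j := b j - s * g j.
have b'0 : forall j, 0 <= b' j.
  move=> j; rewrite /b' subr_ge0.
  case: (ltrP 0 (g j)) => gj.
    by have := Hjm j gj; rewrite ler_pdivlMr // mulrC.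
  apply: (le_trans _ (b0 j)); rewrite -(mulr0 s); exact: ler_wpM2l.
have b'jm : b' jm = 0 by rewrite /b' /s divfK ?subrr // gt_eqF.
have sub : suppf b' \subset suppf b.
  apply/subsetP => j; rewrite !inE /b'; apply: contraNneq => bj.
  by rewrite bj (gsupp j bj) mulr0 subr0.
exists b'; split => //.
- split => //.
  + case: Hnp => [tnz|[j bj gj]]; [by left|right; exists j; by rewrite /b' gj mulr0 subr0].
  + rewrite (eq_bigr (fun j => b j *: v j - s *: (g j *: v j))); last first.
      by move=> j _; rewrite /b' scalerBl scalerA.
    by rewrite sumrB -scaler_sumr g0 scaler0 subr0.
- rewrite (proper_card (A := suppf b') (B := suppf b)) //.
  rewrite properE sub /=; apply/subsetPn; exists jm.
  + by rewrite inE; apply: contraTneq Pjm => /gsupp ->; rewrite ltxx.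
  + by rewrite inE b'jm eqxx.
Qed.

Lemma cara b t : cert b t ->
  exists b' t', [/\ cert b' t', (#|suppf b'| <= 3)%N & suppf b' \subset suppf b].
Proof.
have [k Hk] : exists k, (#|suppf b| <= k)%N by exists #|suppf b|.
elim: k b t Hk => [|k IH] b t Hk Hc.
  by exists b, t; split => //; apply: leq_trans Hk _.
case: (leqP #|suppf b| 3) => [H3|H4]; first by exists b, t.
have step : forall g, (exists j, g j != 0) -> (forall j, b j = 0 -> g j = 0) ->
    \sum_j g j *: v j = 0 -> (t != 0 \/ exists2 j, b j != 0 & g j = 0) ->
    exists b' t', [/\ cert b' t', (#|suppf b'| <= 3)%N & suppf b' \subset suppf b].
  move=> g g1 g2 g3 g4.
  have [b' [c' s' l']] := reduce Hc g1 g2 g3 g4.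
  have Hk' : (#|suppf b'| <= k)%N by rewrite -ltnS (leq_trans l' Hk).
  have [b'' [t'' [c'' l3 s'']]] := IH b' t Hk' c'.
  by exists b'', t''; split => //; apply: subset_trans s'' s'.
have outK : forall (K : {set 'I_n}) j, K \subset suppf b -> b j = 0 -> j \notin K.
  move=> K j KS bj; apply/negP => jK.
  by have := subsetP KS j jK; rewrite inE bj eqxx.
case: Hc => b0 t0 nz Hs.
case: (boolP ((t != 0) || (4 < #|suppf b|)%N)) => [HA|].
  have [K KS cK] := subset_card_ex (k := 4) H4.
  have [g [g1 g2 g3]] : exists g : 'I_n -> R, [/\ exists j, g j != 0,
      forall j, j \notin K -> g j = 0 & \sum_j g j *: v j = 0].
    by apply: dep_vec; apply: (leq_ltn_trans (rank_leq_col _)); rewrite cK.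
  apply: (step g) => //.
  - by move=> j bj; apply: g2; apply: outK bj.
  - case/orP: HA => [tn|H5]; first by left.
    right.
    have : (0 < #|suppf b :\: K|)%N by rewrite cardsD (setIidPr KS) cK subn_gt0.
    case/card_gt0P => j; rewrite in_setD => /andP[jK jS].
    by exists j; [rewrite inE in jS | apply: g2].
rewrite negb_or negbK -leqNgt => /andP[/eqP t0' H4'].
have cS : #|suppf b| = 4 by apply/eqP; rewrite eqn_leq H4' H4.
have [K3 K3S cK3] := subset_card_ex (k := 3) (ltnW H4).
case: (ltnP (\rank (matK K3)) 3) => Hr.
  have [g [g1 g2 g3]] : exists g : 'I_n -> R, [/\ exists j, g j != 0,
      forall j, j \notin K3 -> g j = 0 & \sum_j g j *: v j = 0].
    by apply: dep_vec; apply: (leq_trans Hr); rewrite cK3.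
  apply: (step g) => //.
  - by move=> j bj; apply: g2; apply: outK bj.
  - right.
    have : (0 < #|suppf b :\: K3|)%N by rewrite cardsD (setIidPr K3S) cK3 cS.
    case/card_gt0P => j; rewrite in_setD => /andP[jK jS].
    by exists j; [rewrite inE in jS | apply: g2].
have Hr3 : \rank (matK K3) = 3 by apply/eqP; rewrite eqn_leq rank_leq_col Hr.
have [mu [mu0 muS]] := span_vec d Hr3.
have : (0 < #|suppf b|)%N by rewrite cS.
case/card_gt0P => j0 j0S.
have bpos : forall j, j \in suppf b -> 0 < b j.
  by move=> j; rewrite inE => bj; rewrite lt_def bj b0.
pose jm := [arg max_(j > j0 | j \in suppf b) (- mu j / b j)]%O.
have [Pjm Hjm] : jm \in suppf b /\ forall j, j \in suppf b -> - mu j / b j <= - mu jm / b jm.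
  by rewrite /jm; case: (arg_maxP (P := fun j => j \in suppf b) (fun j => - mu j / b j) j0S).
set s := - mu jm / b jm.
pose b'' j := mu j + s * b j.
have mu_out : forall j, j \notin suppf b -> mu j = 0.
  move=> j jS; apply: mu0; apply: contra jS; exact: (subsetP K3S).
have b''0 : forall j, 0 <= b'' j.
  move=> j; rewrite /b''; case: (boolP (j \in suppf b)) => jS.
    have := Hjm j jS; rewrite -/s ler_pdivrMr ?bpos //; lra.
  have bj : b j = 0 by apply/eqP; move: jS; rewrite inE negbK.
  by rewrite bj mu_out // mulr0 addr0.
have b''jm : b'' jm = 0.
  by rewrite /b'' /s divfK ?addrN // gt_eqF // bpos.
have sub'' : suppf b'' \subset suppf b.
  apply/subsetP => j; rewrite !inE; apply: contraNneq => bj.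
  by rewrite /b'' bj mulr0 addr0 mu_out // inE bj eqxx.
exists b'', 1; split => //.
- split => //; first by left; rewrite oner_eq0.
  rewrite (eq_bigr (fun j => mu j *: v j + s *: (b j *: v j))); last first.
    by move=> j _; rewrite /b'' scalerDl scalerA.
  by rewrite big_split /= -scaler_sumr muS Hs t0' scale0r scaler0 addr0 scale1r.
- have : (#|suppf b''| < #|suppf b|)%N.
    apply: proper_card; rewrite properE sub'' /=.
    by apply/subsetPn; exists jm => //; rewrite inE b''jm eqxx.
  by rewrite cS.
Qed.

End Cara.
Lemma card_fam (aT rT : finType) (F : aT -> pred rT) :
  #|[set g : {ffun aT -> rT} | [forall x, g x \in F x]]| = (\prod_x #|F x|)%N.
Proof.
have -> : #|[set g : {ffun aT -> rT} | [forall x, g x \in F x]]| = #|family F|.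
  by apply: eq_card => g; rewrite inE; apply/forallP/familyP.
rewrite card_family /image_mem.
transitivity (\prod_(x <- enum aT) #|F x|)%N.
  by elim: (enum aT) => [|x e IH] /=; rewrite ?big_nil ?big_cons ?IH.
by rewrite big_enum.
Qed.
Section SS.
Variable T : finType.

Definition shatters (G : {set {set T}}) (W : {set T}) :=
  forall Y : {set T}, Y \subset W -> exists2 B, B \in G & B :&: W = Y.

Lemma pascal_sum s d :
  (\sum_(i < d.+1) 'C(s.+1, i) = \sum_(i < d.+1) 'C(s, i) + \sum_(i < d) 'C(s, i))%N.
Proof.
rewrite big_ord_recl [in X in (_ = X + _)%N]big_ord_recl !bin0 -addnA; congr (_ + _)%N.
rewrite -big_split /=; apply: eq_bigr => i _; by rewrite binS.
Qed.

Lemma shatters_nonempty (G : {set {set T}}) : G != set0 -> shatters G set0.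
Proof.
case/set0Pn => B BG Y; rewrite subset0 => /eqP ->; exists B => //; by rewrite setI0.
Qed.

Theorem sauer_shelah s : forall (S : {set T}) (G : {set {set T}}) d, #|S| = s ->
  {in G, forall B : {set T}, B \subset S} ->
  (forall W : {set T}, W \subset S -> #|W| = d -> ~ shatters G W) ->
  (#|G| <= \sum_(i < d) 'C(s, i))%N.
Proof.
elim: s => [|s IH] S G [|d] cS GS HW.
- case: (G =P set0) => [->|/eqP Gn]; first by rewrite cards0.
  by case: (HW set0 (sub0set _) (cards0 _)); apply: shatters_nonempty.
- have S0 : S = set0 by apply/eqP; rewrite -cards_eq0 cS.
  rewrite big_ord_recl bin0 (leq_trans _ (leq_addr _ _)) //.
  have : G \subset [set set0] by apply/subsetP => B /GS; rewrite S0 subset0 inE.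
  by move/subset_leq_card; rewrite cards1.
- case: (G =P set0) => [->|/eqP Gn]; first by rewrite cards0.
  by case: (HW set0 (sub0set _) (cards0 _)); apply: shatters_nonempty.
have : (0 < #|S|)%N by rewrite cS.
case/card_gt0P => x xS.
set S' := S :\ x.
have cS' : #|S'| = s by rewrite /S' (cardsD1 x S) xS in cS; case: cS.
set X := [set B : {set T} | x \in B].
set G0 := G :\: X.
set G1 := G :&: X.
set phi := fun B : {set T} => B :\ x.
set G' := G0 :|: phi @: G1.
set D := G0 :&: phi @: G1.
have cG : #|G| = (#|G0| + #|G1|)%N by rewrite addnC /G0 /G1 cardsID.
have inj1 : {in G1 &, injective phi}.
  move=> B1 B2; rewrite !inE => /andP[_ x1] /andP[_ x2] e.
  by rewrite -(setD1K x1) -(setD1K x2); congr (_ |: _).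
have cG1 : #|phi @: G1| = #|G1| by rewrite card_in_imset.
have cG' : #|G'| = (#|G0| + #|G1| - #|D|)%N by rewrite cardsU cG1.
have cGD : #|G| = (#|G'| + #|D|)%N.
  rewrite cG' subnK ?cG //.
  by rewrite -cG1; apply: leq_trans (subset_leq_card (subsetIl _ _)) (leq_addr _ _).
have noxS' : x \notin S' by rewrite !inE eqxx.
have G'S : {in G', forall B : {set T}, B \subset S'}.
  move=> B; rewrite inE => /orP[|/imsetP[C]].
    rewrite !inE => /andP[xB BG]; apply/subsetP => y yB; rewrite !inE.
    by rewrite (subsetP (GS _ BG) _ yB) andbT; apply: contraNneq xB => <-.
  rewrite !inE => /andP[CG _] ->; apply/subsetP => y; rewrite !inE => /andP[-> yC].
  by rewrite (subsetP (GS _ CG) _ yC).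
have DS : {in D, forall B : {set T}, B \subset S'}.
  by move=> B; rewrite inE => /andP[B0 _]; apply: G'S; rewrite inE B0.
rewrite cGD pascal_sum; apply: leq_add.
- apply: (IH S' G' d.+1 cS' G'S) => W WS' cW Hsh.
  apply: (HW W (subset_trans WS' (subD1set _ _)) cW) => Y YW.
  have [B BG' BW] := Hsh Y YW.
  move: BG'; rewrite inE => /orP[|/imsetP[C]].
    by rewrite !inE => /andP[_ BG]; exists B.
  rewrite !inE => /andP[CG _] eB; exists C => //; rewrite -BW eB.
  have xW : x \notin W by apply: contra noxS'; exact: (subsetP WS').
  apply/setP => y; rewrite !inE; case: (eqVneq y x) => [->|] /=.
    by rewrite (negbTE xW) andbF.
  by [].
- apply: (IH S' D d cS' DS) => W WS' cW Hsh.
  have xW : x \notin W by apply: contra noxS'; exact: (subsetP WS').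
  apply: (HW (x |: W)).
  + by rewrite subUset sub1set xS (subset_trans WS' (subD1set _ _)).
  + by rewrite cardsU1 xW cW.
  move=> Y YW.
  have YW' : Y :\ x \subset W by rewrite subDset.
  have [B BD BW] := Hsh (Y :\ x) YW'.
  move: BD; rewrite inE => /andP[B0 /imsetP[C]]; rewrite !inE => /andP[CG xC] eB.
  move: B0; rewrite !inE => /andP[xB BG].
  have eC : C = x |: B by rewrite eB setD1K.
  case: (boolP (x \in Y)) => xY.
    exists C => //; apply/setP => y; move/setP: BW => /(_ y); rewrite eC !inE.
    by case: (eqVneq y x) => [->|yx] /=; rewrite ?xY ?(negbTE xB) ?(negbTE xW) //= => ->.
  exists B => //; apply/setP => y; move/setP: BW => /(_ y); rewrite !inE.
  case: (eqVneq y x) => [->|yx] /=; first by rewrite (negbTE xB) (negbTE xY).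
  by move=> ->.
Qed.

End SS.
Section DS.
Local Open Scope nat_scope.
Variables (n j : nat).
Notation m := (8 * j)%N.
Variable F : {set {set 'I_n}}.
Hypothesis HF1 : forall A, A \in F -> (n <= 4 * #|A|)%N.
Hypothesis HF2 : forall W : {set 'I_n}, #|W| = 4 -> ~ shatters F W.
Hypothesis jpos : (0 < j)%N.

Local Notation FF := {ffun 'I_m -> 'I_n}.

Definition hits (g : FF) (A : {set 'I_n}) := #|[set i | g i \in A]|.

Lemma card_ffun_at (i : 'I_m) (P : pred 'I_n) :
  #|[set g : FF | g i \in P]| = (#|P| * n ^ m.-1)%N.
Proof.
have -> : #|[set g : FF | g i \in P]| =
   #|[set g : FF | [forall x, g x \in (if x == i then P else predT)]]|.
  apply: eq_card => g; rewrite !inE; apply/idP/forallP => [gi x|/(_ i)].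
    by case: eqP => [->|]. 
  by rewrite eqxx.
rewrite card_fam (bigD1 i) //= eqxx; congr (_ * _)%N.
rewrite (eq_bigr (fun _ => n)); last by move=> x /negbTE ->; rewrite -[RHS](card_ord n); apply: eq_card.
by rewrite prod_nat_const cardC1 card_ord.
Qed.

Lemma card_sum (T : finType) (P : pred T) : #|[set x | P x]| = \sum_x (P x : nat).
Proof. by rewrite -sum1dep_card big_mkcond; apply: eq_bigr => x _; case: (P x). Qed.

Lemma card_split (T : finType) (P : pred T) : #|[set x | P x]| + #|[set x | ~~ P x]| = #|T|.
Proof.
rewrite -(cardsC [set x | P x]); congr (_ + _); apply: eq_card => x; by rewrite !inE.
Qed.

Lemma markov A : A \in F -> n ^ m <= 7 * #|[set g' : FF | j <= hits g' A]|.
Proof.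
move=> AF; have HA := HF1 AF.
set G := [set g' : FF | j <= hits g' A].
set cA := #|[pred y : 'I_n | y \notin A]|.
have HcA : cA + #|A| = n.
  rewrite addnC -[RHS](card_ord n) -(cardsC A); congr (_ + _).
  by apply: eq_card => y; rewrite !inE.
have cFF : #|{: FF}| = n ^ m by rewrite card_ffun !card_ord.
have Hsum : \sum_(g : FF) #|[set i | g i \notin A]| = m * (cA * n ^ m.-1).
  rewrite (eq_bigr (fun g : FF => \sum_(i < m) (g i \notin A : nat))); last first.
    by move=> g _; rewrite card_sum.
  rewrite exchange_big /= (eq_bigr (fun _ => cA * n ^ m.-1)).
    by rewrite sum_nat_const card_ord.
  move=> i _; rewrite /cA -(card_ffun_at i [pred y | y \notin A]) card_sum; apply: eq_bigr => g _.
  by rewrite inE.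
set B := [set g' : FF | hits g' A < j].
have HB : #|B| * (m - j + 1) <= m * (cA * n ^ m.-1).
  rewrite -Hsum -sum_nat_const [X in _ <= X](bigID (mem B)) /=.
  apply: (leq_trans _ (leq_addr _ _)); apply: leq_sum => g; rewrite inE => gB.
  have := card_split (fun i => g i \in A); rewrite card_ord -/(hits g A).
  have -> : #|[set x | ~~ (g x \in A)]| = #|[set i | g i \notin A]| by [].
  move=> e; lia.
have HGB : #|G| + #|B| = n ^ m.
  rewrite -cFF -(card_split (fun g : FF => j <= hits g A)); congr (_ + _).
  by apply: eq_card => g; rewrite !inE -ltnNge.
have Hn : n * n ^ m.-1 = n ^ m by rewrite -expnS prednK // muln_gt0.
move: HB HGB Hn; set N1 := n ^ m.-1; set X := n ^ m => HB HGB Hn.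
have h1 : 4 * cA <= 3 * n by lia.
have e1 : m - j + 1 = 7 * j + 1 by lia.
rewrite e1 in HB.
have h3 : 4 * (m * (cA * N1)) <= m * (3 * X).
  rewrite -Hn mulnCA leq_mul2l mulnA mulnA leq_mul2r; apply/orP; right.
  by apply/orP; right.
have h4 : j * (28 * #|B|) <= j * (6 * (4 * X)) by nia.
rewrite leq_pmul2l // in h4.
lia.
Qed.

Definition bad := [set g : FF | [exists A in F, [forall i, g i \notin A]]].
Definition bad2 := [set p : FF * FF |
  [exists A in F, [forall i, p.1 i \notin A] && (j <= hits p.2 A)]].

Lemma bad_bad2 : #|bad| * n ^ m <= 7 * #|bad2|.
Proof.
pose W (g : FF) := odflt set0 [pick A in F | [forall i, g i \notin A]].
have HW : forall g, g \in bad -> W g \in F /\ forall i, g i \notin W g.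
  move=> g; rewrite inE => /existsP[A /andP[AF HA]]; rewrite /W.
  case: pickP => [A' /andP[A'F /forallP HA']|/(_ A)] /=; first by split.
  by rewrite AF HA.
pose S2 := [set p : FF * FF | (p.1 \in bad) && (j <= hits p.2 (W p.1))].
have sub : S2 \subset bad2.
  apply/subsetP => -[g g']; rewrite inE /= => /andP[gb hj].
  have [WF HWg] := HW g gb.
  by rewrite inE; apply/existsP; exists (W g); rewrite WF hj andbT /=; apply/forallP.
have cS2 : #|S2| = \sum_(g in bad) #|[set g' : FF | j <= hits g' (W g)]|.
  rewrite card_sum -(pair_big predT predT (fun g g' => ((g \in bad) && (j <= hits g' (W g)) : nat))) /=.
  rewrite [RHS]big_mkcond /=; apply: eq_bigr => g _.
  case: (boolP (g \in bad)) => gb /=; last by rewrite big1.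
  by rewrite card_sum.
apply: (leq_trans _ (leq_mul (leqnn 7) (subset_leq_card sub))).
rewrite cS2 big_distrr /= -sum_nat_const; apply: leq_sum => g gb.
exact: markov (proj1 (HW g gb)).
Qed.

Definition swp (s : {ffun 'I_m -> bool}) (p : FF * FF) : FF * FF :=
  ([ffun i => if s i then p.2 i else p.1 i], [ffun i => if s i then p.1 i else p.2 i]).

Lemma swpK s : involutive (swp s).
Proof.
move=> [g g']; rewrite /swp /=; congr (_, _); apply/ffunP => i; rewrite !ffunE;
by case: (s i).
Qed.

Definition CB (p : FF * FF) (B : {set 'I_n}) :=
  [set s : {ffun 'I_m -> bool} | [forall i, (swp s p).1 i \notin B] && (j <= hits (swp s p).2 B)].

Lemma CB_bound p B : #|CB p B| <= 2 ^ (m - j).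
Proof.
case: (boolP [exists i, (p.1 i \in B) && (p.2 i \in B)]) => [/existsP[i /andP[h1 h2]]|Hno].
  have -> : CB p B = set0.
    apply/setP => s; rewrite !inE; apply/negP => /andP[/forallP/(_ i)].
    by rewrite ffunE; case: (s i); rewrite ?h1 ?h2.
  by rewrite cards0.
set K := [set i | (p.1 i \in B) != (p.2 i \in B)].
case: (boolP (CB p B == set0)) => [/eqP->|/set0Pn[s0 s0C]]; first by rewrite cards0.
have hK : j <= #|K|.
  move: s0C; rewrite inE => /andP[/forallP H1 H2]; apply: (leq_trans H2).
  apply: subset_leq_card; apply/subsetP => i; rewrite !inE !ffunE.
  move: (H1 i) (negP (existsPn Hno i)); rewrite !ffunE.
  by case: (s0 i); case: (p.1 i \in B); case: (p.2 i \in B).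
have HC : CB p B \subset
    [set s : {ffun 'I_m -> bool} | [forall i, s i \in (if i \in K then pred1 (p.1 i \in B) else predT)]].
  apply/subsetP => s; rewrite !inE => /andP[/forallP H1 _]; apply/forallP => i.
  case: ifP => // iK; rewrite inE; move: iK (H1 i); rewrite !inE !ffunE.
  by case: (s i); case: (p.1 i \in B); case: (p.2 i \in B).
apply: (leq_trans (subset_leq_card HC)); rewrite card_fam.
rewrite (bigID (mem K)) /= big1; last by move=> i ->; rewrite card1.
rewrite (eq_bigr (fun _ => 2)); last first.
  by move=> i /negbTE ->; rewrite -[RHS]card_bool; apply: eq_card.
rewrite prod_nat_const mul1n leq_pexp2l //.
rewrite (@eq_card _ _ (~: K)); last by move=> i; rewrite inE.
have := cardsC K; rewrite card_ord; lia.
Qed.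

Definition pi_bound := \sum_(i < 4) 'C(2 * m, i).

Lemma per_p p : #|[set s | swp s p \in bad2]| <= pi_bound * 2 ^ (m - j).
Proof.
set S := [set y | [exists i, (p.1 i == y) || (p.2 i == y)]].
have cS : #|S| <= 2 * m.
  have : S \subset (p.1 @: setT) :|: (p.2 @: setT).
    apply/subsetP => y; rewrite !inE => /existsP[i /orP[]/eqP <-].
      by apply/orP; left; apply: imset_f.
    by apply/orP; right; apply: imset_f.
  move/subset_leq_card => h; apply: (leq_trans h); apply: (leq_trans (leq_card_setU _ _)).
  rewrite mul2n -addnn; apply: leq_add; apply: (leq_trans (leq_imset_card _ _));
  by rewrite cardsT card_ord.
set TF := [set A :&: S | A in F].
have cTF : #|TF| <= pi_bound.
  have h1 : {in TF, forall B : {set 'I_n}, B \subset S}.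
    by move=> B /imsetP[A _ ->]; apply: subsetIr.
  have h2 : forall W : {set 'I_n}, W \subset S -> #|W| = 4 -> ~ shatters TF W.
    move=> W WS cW Hsh; apply: (HF2 cW) => Y YW.
    have [B /imsetP[A AF ->] BW] := Hsh Y YW.
    by exists A => //; rewrite -BW -setIA (setIidPr WS).
  apply: (leq_trans (sauer_shelah (erefl #|S|) h1 h2)).
  by rewrite /pi_bound; apply: leq_sum => i _; apply: leq_bin2l.
have valS : forall s i, (swp s p).1 i \in S /\ (swp s p).2 i \in S.
  move=> s i; rewrite !ffunE !inE; split; apply/existsP; exists i;
  by case: (s i); rewrite eqxx ?orbT.
have Hcov : forall s, swp s p \in bad2 -> exists2 B, B \in TF & s \in CB p B.
  move=> s; rewrite inE => /existsP[A /andP[AF /andP[/forallP H1 H2]]].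
  exists (A :&: S); first by apply: imset_f.
  rewrite inE; apply/andP; split.
    by apply/forallP => i; rewrite inE negb_and H1.
  apply: (leq_trans H2); apply: subset_leq_card; apply/subsetP => i; rewrite !inE => ->.
  by move: (proj2 (valS s i)); rewrite inE.
rewrite card_sum.
apply: (@leq_trans (\sum_s \sum_(B in TF) (s \in CB p B : nat))).
  apply: leq_sum => s _; case: (boolP (swp s p \in bad2)) => // /Hcov[B BT sB].
  by rewrite (bigD1 B) //= sB.
rewrite exchange_big /=.
apply: (@leq_trans (\sum_(B in TF) 2 ^ (m - j))).
  apply: leq_sum => B _; apply: leq_trans (CB_bound p B); rewrite -card_sum.
  by apply: eq_leq; apply: eq_card => x; rewrite inE.
by rewrite sum_nat_const leq_mul2r cTF orbT.
Qed.

Lemma swap_count : 2 ^ j * #|bad2| <= n ^ m * n ^ m * pi_bound.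
Proof.
have cFF : #|{: FF}| = n ^ m by rewrite card_ffun !card_ord.
have H1 : \sum_(s : {ffun 'I_m -> bool}) #|[set p | swp s p \in bad2]| = 2 ^ m * #|bad2|.
  rewrite (eq_bigr (fun _ => #|bad2|)).
    by rewrite sum_nat_const card_ffun card_bool card_ord.
  move=> s _; have := card_preimset bad2 (can_inj (swpK s)).
  by move=> <-; apply: eq_card => q; rewrite !inE.
have H2 : \sum_(s : {ffun 'I_m -> bool}) #|[set p | swp s p \in bad2]| =
          \sum_(p : FF * FF) #|[set s | swp s p \in bad2]|.
  under eq_bigr do rewrite card_sum.
  rewrite exchange_big /=; apply: eq_bigr => q _; by rewrite card_sum.
have H3 : \sum_(p : FF * FF) #|[set s | swp s p \in bad2]| <= n ^ m * n ^ m * (pi_bound * 2 ^ (m - j)).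
  apply: (@leq_trans (\sum_(q : FF * FF) pi_bound * 2 ^ (m - j))).
    by apply: leq_sum => q _; apply: per_p.
  by rewrite sum_nat_const card_prod cFF.
have Hm : 2 ^ m = 2 ^ (m - j) * 2 ^ j by rewrite -expnD subnK // leq_pmull.
rewrite -H2 H1 Hm in H3.
rewrite -(leq_pmul2l (expn_gt0 2 (m - j))).
move: H3; set a := 2 ^ (m - j); set b := 2 ^ j; set X := n ^ m; set c := #|bad2|.
move=> H3; apply: (leq_trans _ (leq_trans H3 _)); first by rewrite mulnA.
by rewrite [pi_bound * a]mulnC !mulnA [X * X * a]mulnAC [X * a]mulnC.
Qed.

Lemma bad_small : 28 * pi_bound <= 2 ^ j -> 4 * #|bad| <= n ^ m.
Proof.
move=> Hj.
have H1 := bad_bad2; have H2 := swap_count.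
have pi0 : 0 < pi_bound by rewrite /pi_bound big_ord_recl bin0.
case: (posnP (n ^ m)) => [X0|Xpos].
  have : #|bad| * n ^ m = 0 by rewrite X0 muln0.
  move: H1; rewrite X0 muln0 => _.
  have -> : #|bad| = 0.
    apply/eqP; rewrite cards_eq0; apply/eqP/setP => g; rewrite !inE.
    have : #|{: FF}| = 0 by rewrite card_ffun !card_ord.
    by move/eqP; rewrite -cardsT cards_eq0 => /eqP/setP/(_ g); rewrite !inE.
  by [].
move: H1 H2 Hj Xpos pi0; set X := n ^ m; set b1 := #|bad|; set b2 := #|bad2|;
set P := pi_bound; set T := 2 ^ j => H1 H2 Hj Xpos pi0.
have h3 : b1 * X * T <= 7 * (X * X * P).
  apply: (leq_trans (leq_mul H1 (leqnn T))).
  by rewrite -mulnA [b2 * T]mulnC leq_mul2l H2 orbT.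
have h4 : b1 * T <= 7 * X * P.
  rewrite -(leq_pmul2r Xpos).
  have e1 : b1 * T * X = b1 * X * T by nia.
  have e2 : 7 * X * P * X = 7 * (X * X * P) by nia.
  by rewrite e1 e2.
have h5 : b1 * (28 * P) <= 7 * X * P by apply: leq_trans h4; rewrite leq_mul2l Hj orbT.
have h6 : (4 * b1) * (7 * P) <= X * (7 * P).
  have e3 : 4 * b1 * (7 * P) = b1 * (28 * P) by nia.
  have e4 : X * (7 * P) = 7 * X * P by nia.
  by rewrite e3 e4.
rewrite leq_pmul2r ?muln_gt0 // in h6.
Qed.

End DS.
Section ExJ.
Local Open Scope nat_scope.
Lemma exp_ge_bin4 j : 'C(j, 4) <= 2 ^ j.
Proof.
have := card_draws 'I_j 4; rewrite card_ord => <-.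
have <- : #|powerset [set: 'I_j]| = 2 ^ j by rewrite card_powerset cardsT card_ord.
apply: subset_leq_card; by apply/subsetP => A _; rewrite powersetE subsetT.
Qed.

Lemma bin4E j : 'C(j, 4) * 24 = j * (j - 1) * (j - 2) * (j - 3).
Proof.
rewrite (bin_ffact j 4) !ffactnS ffactn0 muln1 -!subn1 -!subnDA !mulnA.
by [].
Qed.
Lemma bin3E N : 'C(N, 3) * 6 = N * (N - 1) * (N - 2).
Proof. by rewrite (bin_ffact N 3) !ffactnS ffactn0 muln1 -!subn1 -?subnDA ?mulnA. Qed.

Lemma bin2E N : 'C(N, 2) * 2 = N * (N - 1).
Proof. by rewrite (bin_ffact N 2) !ffactnS ffactn0 muln1 -!subn1 -?subnDA ?mulnA. Qed.

Lemma poly_bound j : (4000 * 4000 * 4) <= j -> 28 * \sum_(i < 4) 'C(2 * (8 * j), i) <= 2 ^ j.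
Proof.
move=> Hj.
apply: (leq_trans _ (exp_ge_bin4 j)).
rewrite !big_ord_recr big_ord0 /= bin0 bin1.
set N := 2 * (8 * j).
have h2 := bin2E N; have h3 := bin3E N; have h4 := bin4E j.
have hN : 1 <= N by rewrite /N; lia.
have e2 : N * (N - 1) <= N * N by rewrite leq_mul2l leq_subr orbT.
have e3 : N * (N - 1) * (N - 2) <= N * N * N by apply: leq_mul => //; apply: leq_subr.
have e1 : N <= N * N by rewrite leq_pmulr.
have e0 : N * N <= N * N * N by rewrite leq_pmulr.
have eN3 : N * N * N = 4096 * (j * j * j) by rewrite /N; ring.
have b1 : j * (j - 3) * (j - 3) * (j - 3) <= j * (j - 1) * (j - 2) * (j - 3).
  apply: leq_mul => //; apply: leq_mul; [apply: leq_mul => //|]; apply: leq_sub2l => //.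
have b2 : j * j * j * j <= 8 * (j * (j - 3) * (j - 3) * (j - 3)).
  have -> : 8 * (j * (j - 3) * (j - 3) * (j - 3)) =
            j * (2 * (j - 3)) * (2 * (j - 3)) * (2 * (j - 3)) by ring.
  have a1 : j <= 2 * (j - 3) by lia.
  by apply: leq_mul => //; apply: leq_mul => //; apply: leq_mul.
have b3 : (4000 * 4000 * 4) * (j * j * j) <= j * j * j * j.
  by rewrite [X in _ <= X](_ : _ = j * (j * j * j)) ?leq_mul2r ?Hj ?orbT //; ring.
lia.
Qed.

Lemma exists_j : exists j, 0 < j /\ 28 * \sum_(i < 4) 'C(2 * (8 * j), i) <= 2 ^ j.
Proof.
exists ((4000 * 4000 * 8)); split; first lia.
by apply: poly_bound; lia.
Qed.

End ExJ.
Lemma sum_option (T : finType) (V : nmodType) (F : option T -> V) :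
  \sum_(o : option T) F o = F None + \sum_(i : T) F (Some i).
Proof.
rewrite (bigD1 None) //=; congr (_ + _).
rewrite (reindex_omap Some id) /=; last by case.
by apply: eq_bigl => x; rewrite eqxx.
Qed.

Section Count.
Local Open Scope nat_scope.
Variables (n m : nat).
Local Notation FF := {ffun 'I_m -> 'I_n}.

Lemma card_le_sum (I : finType) (S : {set FF}) (Q : I -> {set FF}) :
  (forall x, x \in S -> exists i, x \in Q i) -> #|S| <= \sum_i #|Q i|.
Proof.
move=> H; rewrite (_ : #|S| = \sum_x (x \in S : nat)); last first.
  by rewrite -card_sum; apply: eq_card => x; rewrite inE.
apply: (@leq_trans (\sum_x \sum_i (x \in Q i : nat))).
  apply: leq_sum => x _; case: (boolP (x \in S)) => // /H [i xi].
  by rewrite (bigD1 i) //= xi.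
rewrite exchange_big /=; apply: leq_sum => i _; rewrite -card_sum.
by apply: eq_leq; apply: eq_card => x; rewrite inE.
Qed.

Lemma card_fix (P : {set 'I_m}) (val : 'I_m -> 'I_n) :
  #|[set g : FF | [forall x in P, g x == val x]]| = n ^ (m - #|P|).
Proof.
have -> : #|[set g : FF | [forall x in P, g x == val x]]| =
   #|[set g : FF | [forall x, g x \in (if x \in P then pred1 (val x) else predT)]]|.
  apply: eq_card => g; rewrite !inE; apply/forallP/forallP => H x; move: (H x).
    by case: (x \in P) => //= /eqP ->; rewrite inE.
  by case: (x \in P) => //=; rewrite inE.
rewrite card_fam (bigID (mem P)) /= big1; last by move=> x ->; rewrite card1.
rewrite (eq_bigr (fun _ => n)); last first.
  by move=> x /negbTE ->; rewrite -[RHS](card_ord n); apply: eq_card.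
rewrite prod_nat_const mul1n (@eq_card _ _ (~: P)); last by move=> i; rewrite inE.
have := cardsC P; rewrite card_ord => e; congr (_ ^ _); by rewrite -[X in X - _]e addKn.
Qed.

Lemma noninj_bound : #|[set g : FF | ~~ injectiveb g]| <= m * m * (n * n ^ (m - 2)).
Proof.
pose Q (t : 'I_m * 'I_m * 'I_n) : {set FF} :=
  if t.1.1 != t.1.2 then [set g : FF | [forall x in [set t.1.1; t.1.2], g x == t.2]]
  else set0.
apply: (leq_trans (card_le_sum (Q := Q) _)).
  move=> g; rewrite inE => /injectivePn [x [y xy gxy]].
  exists ((x, y), g x); rewrite /Q /= xy !inE; apply/forallP => z.
  by apply/implyP; rewrite !inE => /orP[]/eqP ->; rewrite ?gxy.
apply: (@leq_trans (\sum_(t : 'I_m * 'I_m * 'I_n) n ^ (m - 2))).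
  apply: leq_sum => -[[x y] a] _; rewrite /Q /=; case: ifP => xy; last by rewrite cards0.
  by rewrite card_fix cards2 xy.
by rewrite sum_nat_const !card_prod !card_ord mulnA.
Qed.

Lemma tri_bound (T : {set 'I_n}) : #|T| = 3 ->
  #|[set g : FF | T \subset [set g i | i in 'I_m]]| <= m * m * m * n ^ (m - 3).
Proof.
move=> cT.
have : 0 < #|T| by rewrite cT.
case/card_gt0P => a aT.
have : 0 < #|T :\ a| by have := cT; rewrite (cardsD1 a T) aT /=; lia.
case/card_gt0P => b; rewrite !inE => /andP[ba bT].
have : 0 < #|T :\ a :\ b|.
  by have := cT; rewrite (cardsD1 a T) aT (cardsD1 b (T :\ a)) !inE ba bT /=; lia.
case/card_gt0P => c'; rewrite !inE => /andP[cb /andP[ca cT']].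
pose Q (t : 'I_m * 'I_m * 'I_m) : {set FF} :=
  [set g : FF | (g t.1.1 == a) && (g t.1.2 == b) && (g t.2 == c')].
apply: (leq_trans (card_le_sum (Q := Q) _)).
  move=> g; rewrite inE => /subsetP HT.
  have [x _ ex] := imsetP (HT a aT).
  have [y _ ey] := imsetP (HT b bT).
  have [z _ ez] := imsetP (HT c' cT').
  by exists ((x, y), z); rewrite /Q inE /= -ex -ey -ez !eqxx.
apply: (@leq_trans (\sum_(t : 'I_m * 'I_m * 'I_m) n ^ (m - 3))).
  2: by rewrite sum_nat_const !card_prod !card_ord.
apply: leq_sum => -[[x y] z] _; rewrite /Q /=.
case: (boolP [&& x != y, x != z & y != z]) => [/and3P[xy xz yz]|nd]; last first.
  rewrite (_ : [set _ | _] = set0) ?cards0 //; apply/setP => g; rewrite !inE.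
  apply/negP => /andP[/andP[/eqP gx /eqP gy] /eqP gz].
  move: nd; rewrite !negb_and !negbK => /or3P[/eqP exy|/eqP exz|/eqP eyz].
  - by move: ba; rewrite -gx -gy exy eqxx.
  - by move: ca; rewrite -gx -gz exz eqxx.
  - by move: cb; rewrite -gy -gz eyz eqxx.
pose val (k : 'I_m) := if k == x then a else if k == y then b else c'.
rewrite (_ : [set _ | _] = [set g : FF | [forall k in [set x; y; z], g k == val k]]).
  have c3 : #|[set x; y; z]| = 3.
    by rewrite setUC cardsU1 cards2 !inE xy /= (eq_sym z x) (negbTE xz) (eq_sym z y) (negbTE yz).
  by rewrite card_fix c3.
apply/setP => g; rewrite !inE; apply/idP/forallP => [/andP[/andP[gx gy] gz] k|H].
  apply/implyP; rewrite !inE /val => /orP[/orP[/eqP->|/eqP->]|/eqP->].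
  - by rewrite eqxx.
  - by rewrite (eq_sym y x) (negbTE xy) eqxx.
  - by rewrite (eq_sym z x) (negbTE xz) (eq_sym z y) (negbTE yz).
have hx := H x; have hy := H y; have hz := H z.
rewrite !inE !eqxx ?orbT /= /val in hx hy hz.
rewrite eqxx in hx; rewrite (eq_sym y x) (negbTE xy) eqxx in hy.
rewrite (eq_sym z x) (negbTE xz) (eq_sym z y) (negbTE yz) in hz.
by rewrite hx hy hz.
Qed.

End Count.

Lemma ext3 (T : finType) (A B : {set T}) :
  A \subset B -> (#|A| <= 3)%N -> (3 <= #|B|)%N ->
  exists C : {set T}, [/\ A \subset C, C \subset B & #|C| = 3].
Proof.
move=> AB A3 B3.
have : (3 - #|A| <= #|B :\: A|)%N by rewrite cardsD (setIidPr AB); lia.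
case/subset_card_ex => D DBA cD.
exists (A :|: D); split.
- exact: subsetUl.
- by rewrite subUset AB (subset_trans DBA) // subDset subsetUr.
- have dAD : [disjoint A & D].
    rewrite -setI_eq0; apply/eqP/setP => x; rewrite !inE.
    case: (boolP (x \in D)) => xD; last by rewrite andbF.
    by move: (subsetP DBA x xD); rewrite !inE => /andP[/negbTE -> _].
  by rewrite cardsU (disjoint_setI0 dAD) cards0 subn0 cD; lia.
Qed.

Section Main.
Variable R : realType.
Variables (n : nat) (f : 'I_n -> 'rV[R]_3) (c r : 'rV[R]_3).
Hypothesis Hcp : centerpoint f c.
Hypothesis Hz : forall i, 0 < zcoord (f i).
Hypothesis Hr : zcoord r = 0.
Hypothesis npos : (0 < n)%N.

Definition vv i := f i - c.
Definition dd := r - c.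

Lemma dot3B (u a b : 'rV[R]_3) : dot3 u (a - b) = dot3 u a - dot3 u b.
Proof. by rewrite /dot3 -sumrB; apply: eq_bigr => i _; rewrite !mxE mulrBr. Qed.

Lemma dot3_sum (I : finType) (u : 'rV[R]_3) (l : I -> R) (w : I -> 'rV[R]_3) :
  dot3 u (\sum_i l i *: w i) = \sum_i l i * dot3 u (w i).
Proof.
rewrite /dot3 (eq_bigr (fun k => \sum_i u ord0 k * (l i * w i ord0 k))); last first.
  by move=> k _; rewrite summxE mulr_sumr; apply: eq_bigr => i _; rewrite mxE.
rewrite exchange_big /=; apply: eq_bigr => i _; rewrite mulr_sumr.
by apply: eq_bigr => k _; rewrite mulrCA.
Qed.

Lemma zcoordD (a b : 'rV[R]_3) : zcoord (a + b) = zcoord a + zcoord b.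
Proof. by rewrite /zcoord mxE. Qed.
Lemma zcoordZ (k : R) (a : 'rV[R]_3) : zcoord (k *: a) = k * zcoord a.
Proof. by rewrite /zcoord mxE. Qed.
Lemma zcoordB (a b : 'rV[R]_3) : zcoord (a - b) = zcoord a - zcoord b.
Proof. by rewrite /zcoord !mxE. Qed.
Lemma zcoord_sum (I : finType) (l : I -> R) (w : I -> 'rV[R]_3) :
  zcoord (\sum_i l i *: w i) = \sum_i l i * zcoord (w i).
Proof. by rewrite /zcoord summxE; apply: eq_bigr => i _; rewrite mxE. Qed.

Lemma cz_pos : 0 < zcoord c.
Proof.
pose u : 'rV[R]_3 := - delta_mx 0 (inord 2).
have du : forall x, dot3 u x = - zcoord x.
  move=> x; rewrite /dot3 /zcoord (bigD1 (inord 2)) //= big1 ?addr0.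
    by rewrite !mxE !eqxx mulN1r.
  move=> k /negbTE kn; rewrite !mxE kn /=.
  by rewrite mulr0n oppr0 mul0r.
have u0 : u != 0.
  apply/eqP => /rowP /(_ (inord 2)); rewrite !mxE !eqxx /= => /eqP.
  by rewrite oppr_eq0 oner_eq0.
have := Hcp (b := dot3 u c) u0 (lexx _).
case: (boolP [exists i, dot3 u c <= dot3 u (f i)]) => [/existsP[i]|/existsPn H].
  by rewrite !du lerN2 => hi _; apply: lt_le_trans (Hz i) hi.
rewrite (_ : [set i | _] = set0) ?cards0 ?muln0; first by rewrite leqn0 => /eqP n0; move: npos; rewrite n0.
by apply/setP => i; rewrite !inE; apply/negbTE/H.
Qed.

Definition Fam := [set A : {set 'I_n} |
  `[< exists u : 'rV[R]_3, u != 0 /\ A = [set i | 0 <= dot3 u (vv i)] >]].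

Lemma Fam_big A : A \in Fam -> (n <= 4 * #|A|)%N.
Proof.
rewrite inE => /asboolP [u [u0 ->]].
have := Hcp (b := dot3 u c) u0 (lexx _).
congr (_ <= 4 * _)%N; apply: eq_card => i; rewrite !inE /vv dot3B subr_ge0.
by [].
Qed.

Lemma Fam_vc (W : {set 'I_n}) : #|W| = 4 -> ~ shatters Fam W.
Proof.
move=> cW Hsh.
have [g [[j0 gj0] gout gsum]] : exists g : 'I_n -> R, [/\ exists j, g j != 0,
    forall j, j \notin W -> g j = 0 & \sum_j g j *: vv j = 0].
  by apply: dep_vec; apply: (leq_ltn_trans (rank_leq_col _)); rewrite cW.
have [g' [[k0 gk0] gout' gsum']] : exists g' : 'I_n -> R, [/\ exists k, g' k < 0,
    forall j, j \notin W -> g' j = 0 & \sum_j g' j *: vv j = 0].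
  case: (boolP [exists k, g k < 0]) => [/existsP[k gk]|/existsPn H].
    by exists g; split => //; exists k.
  exists (fun k => - g k); split.
  - exists j0; rewrite oppr_lt0 lt_def gj0 /=; move: (H j0); by rewrite -leNgt.
  - by move=> j /gout ->; rewrite oppr0.
  - rewrite (eq_bigr (fun j => - (g j *: vv j))); last by move=> j _; rewrite scaleNr.
    by rewrite sumrN gsum oppr0.
have subY : [set k in W | 0 < g' k] \subset W by apply/subsetP => k; rewrite inE => /andP[].
have [B BF BW] := Hsh _ subY.
move: BF; rewrite inE => /asboolP [u [u0 eB]].
have hmem : forall k, k \in W -> (0 <= dot3 u (vv k)) = (0 < g' k).
  move=> k kW; move/setP: BW => /(_ k); rewrite eB !inE kW andbT /=.
  by [].
have := congr1 (dot3 u) gsum'; rewrite dot3_sum.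
have -> : dot3 u 0 = 0 by rewrite /dot3 big1 // => k _; rewrite mxE mulr0.
have k0W : k0 \in W by apply: contraLR gk0 => /gout' ->; rewrite ltxx.
rewrite (bigD1 k0) //=.
have t0 : 0 < g' k0 * dot3 u (vv k0).
  rewrite nmulr_rgt0 // ltNge hmem // -leNgt; exact: ltW.
have rest : 0 <= \sum_(k | k != k0) g' k * dot3 u (vv k).
  apply: sumr_ge0 => k _; case: (boolP (k \in W)) => kW; last by rewrite gout' // mul0r.
  case: (ltrP 0 (g' k)) => gk.
    by apply: mulr_ge0; [exact: ltW | rewrite hmem].
  apply: mulr_le0; first exact: gk.
  by apply: ltW; rewrite ltNge hmem // -leNgt.
move=> e.
have h : g' k0 * dot3 u (vv k0) <= g' k0 * dot3 u (vv k0) + \sum_(k | k != k0) g' k * dot3 u (vv k).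
  by rewrite lerDl.
by move: (lt_le_trans t0 h); rewrite e ltxx.
Qed.


Lemma good_cert (m : nat) (g : {ffun 'I_m -> 'I_n}) :
  (forall A, A \in Fam -> exists i, g i \in A) ->
  exists b t, cert vv dd b t /\ suppf b \subset [set g i | i in 'I_m].
Proof.
move=> Hgood.
pose w (o : option 'I_m) : 'rV[R]_3 := if o is Some i then vv (g i) else - dd.
have Hinf : forall u, exists o, 0 <= dotv u (w o).
  move=> u; case: (eqVneq u 0) => [->|u0].
    by exists None; rewrite /dotv big1 // => k _; rewrite mxE mul0r.
  have AF : [set i | 0 <= dot3 u (vv i)] \in Fam by rewrite inE; apply/asboolP; exists u.
  have [i gi] := Hgood _ AF.
  by exists (Some i); rewrite inE in gi.
have [l [l0 [o0 lo0] lsum]] := gordan Hinf.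
pose b j := \sum_(i | g i == j) l (Some i).
have bge : forall i, l (Some i) <= b (g i).
  move=> i; rewrite /b (bigD1 i) //= lerDl; apply: sumr_ge0 => k _; exact: l0.
exists b, (l None); split.
  split.
  - by move=> j; apply: sumr_ge0 => i _; exact: l0.
  - exact: l0.
  - case: o0 lo0 => [i|] lo0; last by left; rewrite gt_eqF.
    by right; exists (g i); rewrite gt_eqF // (lt_le_trans lo0 (bge i)).
  - move: lsum; rewrite sum_option /= scalerN => /eqP; rewrite addrC subr_eq0 => /eqP <-.
    rewrite (partition_big g predT) //=; apply: eq_bigr => j _.
    by rewrite scaler_suml; apply: eq_bigr => i /eqP ->.
apply/subsetP => j; rewrite inE => bj.
case: (boolP [exists i, g i == j]) => [/existsP[i /eqP <-]|/existsPn H].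
  by apply: imset_f.
by move: bj; rewrite /b big_pred0 ?eqxx // => i; exact: negbTE (H i).
Qed.

Lemma hit_of_cert b t (T : {set 'I_n}) : cert vv dd b t -> suppf b \subset T ->
  exists x, in_conv_hull f T x /\ on_segment c r x.
Proof.
case => b0 t0 nz bs sT.
have cz := cz_pos.
set Sb := \sum_j b j.
have Sb0 : 0 < Sb.
  rewrite lt_def psumr_eq0 // andbC sumr_ge0 //=.
  apply/negP => /allP Hall.
  have bz : forall j, b j = 0 by move=> j; apply/eqP/Hall; rewrite mem_index_enum.
  case: nz => [tn|[j bj]]; last by rewrite bz eqxx in bj.
  move: bs; rewrite big1 => [/esym/eqP|j _]; last by rewrite bz scale0r.
  rewrite scaler_eq0 (negbTE tn) /= /dd subr_eq0 => /eqP rc.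
  by move: cz; rewrite -rc Hr ltxx.
pose w j := b j / Sb.
exists (\sum_j w j *: f j); split.
  exists w; split => //.
  - by move=> j; apply: divr_ge0; [exact: b0 | exact: ltW].
  - move=> j jT; rewrite /w; have : b j = 0.
      by apply/eqP; apply: contraNT jT => bj; apply: (subsetP sT); rewrite inE.
    by move=> ->; rewrite mul0r.
  - by rewrite /w -mulr_suml divff // gt_eqF.
have ex : \sum_j w j *: f j = c + (t / Sb) *: dd.
  have e1 : \sum_j b j *: vv j = \sum_j b j *: f j - Sb *: c.
    rewrite /vv (eq_bigr (fun j => b j *: f j - b j *: c)); last by move=> j _; rewrite scalerBr.
    by rewrite sumrB -scaler_suml.
  have e2 : \sum_j w j *: f j = Sb^-1 *: \sum_j b j *: f j.
    by rewrite scaler_sumr; apply: eq_bigr => j _; rewrite /w scalerA mulrC.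
  rewrite e2 -mulrC -scalerA -bs e1 scalerBr scalerA mulVf ?gt_eqF // scale1r.
  by rewrite addrC subrK.
exists (t / Sb); split.
- by apply: divr_ge0; [exact: t0 | exact: ltW].
- have hz : 0 <= zcoord (\sum_j w j *: f j).
    rewrite zcoord_sum; apply: sumr_ge0 => j _; apply: mulr_ge0.
      by apply: divr_ge0; [exact: b0 | exact: ltW].
    exact: ltW.
  move: hz; rewrite ex zcoordD zcoordZ /dd zcoordB Hr.
  set s := t / Sb => hz.
  have : 0 <= (1 - s) * zcoord c by lra.
  by rewrite pmulr_lge0 // subr_ge0.
- by rewrite ex /dd scalerBr scalerBl scale1r addrA addrAC.
Qed.

End Main.

Theorem lemma2p16 :
  exists alpha : rat, 0 < alpha /\
  exists N : nat,
  forall (R : realType) (n : nat) (f : 'I_n -> 'rV[R]_3) (c r : 'rV[R]_3),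
    (N <= n)%N ->
    injective f ->
    (forall i, 0 < zcoord (f i)) ->
    centerpoint f c ->
    zcoord r = 0 ->
    exists Tr : {set {set 'I_n}},
      (forall S, S \in Tr ->
         #|S| = 3%N /\ exists x, in_conv_hull f S x /\ on_segment c r x) /\
      ratr alpha * n%:R ^+ 3 <= (#|Tr|%:R : R).
Proof.
have [j [jpos Hj]] := exists_j.
have m3 : (3 <= (8 * j))%N by lia.
have mpos : (0 < 2 * (8 * j) ^ 3)%N by rewrite muln_gt0 expn_gt0 (leq_trans _ m3).
exists ((2 * (8 * j) ^ 3)%:R^-1); split; first by rewrite invr_gt0 ltr0n.
exists (4 * ((8 * j) * (8 * j)) + 1)%N.
move=> R n f c r Hn _ Hz Hcp Hr.
have npos : (0 < n)%N by lia.
set Tr := [set S : {set 'I_n} | (#|S| == 3)%N &&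
   `[< exists x, in_conv_hull f S x /\ on_segment c r x >]].
exists Tr; split.
  by move=> S; rewrite inE => /andP[/eqP -> /asboolP H]; split.
set X := (n ^ (8 * j))%N.
have cFF : #|{: {ffun 'I_(8 * j) -> 'I_n}}| = X by rewrite card_ffun !card_ord.
have Hbad : (4 * #|bad j (Fam f c)| <= X)%N.
  apply: bad_small => //.
  - by move=> A; apply: Fam_big.
  - by move=> W; apply: Fam_vc.
have Hni : (4 * #|[set g : {ffun 'I_(8 * j) -> 'I_n} | ~~ injectiveb g]| <= X)%N.
  have h := noninj_bound n (8 * j).
  have eX : X = (n * (n * n ^ ((8 * j) - 2)))%N.
    by rewrite -!expnS /X; congr (_ ^ _)%N; lia.
  rewrite eX; apply: (leq_trans (leq_mul (leqnn 4) h)).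
  rewrite mulnA; apply: leq_mul => //; lia.
set G := [set g : {ffun 'I_(8 * j) -> 'I_n} | injectiveb g && (g \notin bad j (Fam f c))].
have HG : (X <= 2 * #|G|)%N.
  have : (X <= #|G| + #|bad j (Fam f c)| + #|[set g : {ffun 'I_(8 * j) -> 'I_n} | ~~ injectiveb g]|)%N.
    rewrite -cFF -cardsT; apply: (leq_trans _ (leq_add (leq_card_setU _ _) (leqnn _))).
    apply: (leq_trans _ (leq_card_setU _ _)); apply: subset_leq_card.
    apply/subsetP => g _; rewrite !in_setU.
    case: (boolP (injectiveb g)) => gi; last by apply/orP; right; rewrite inE gi.
    case: (boolP (g \in G)) => gG //=.
    have gb : g \in bad j (Fam f c) by move: gG; rewrite inE gi /= negbK.
    by apply/orP; left; exact: gb.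
  lia.
have HGT : (#|G| <= #|Tr| * ((8 * j) * (8 * j) * (8 * j) * n ^ ((8 * j) - 3)))%N.
  pose Q (T : {set 'I_n}) : {set {ffun 'I_(8 * j) -> 'I_n}} :=
    if T \in Tr then [set g : {ffun 'I_(8 * j) -> 'I_n} | T \subset [set g i | i in 'I_(8 * j)]] else set0.
  apply: (leq_trans (card_le_sum (Q := Q) _)).
    move=> g; rewrite inE => /andP[ginj gnb].
    have Hgood : forall A, A \in Fam f c -> exists i, g i \in A.
      move=> A AF; move: gnb; rewrite inE negb_exists => /forallP /(_ A).
      by rewrite AF /= negb_forall => /existsP[i]; rewrite negbK; exists i.
    have [b [t [Hc Hs]]] := good_cert r Hgood.
    have [b' [t' [Hc' Hs3 Hsub]]] := cara Hc.
    have im3 : (3 <= #|[set g i | i in 'I_(8 * j)]|)%N.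
      by rewrite card_imset ?card_ord //; apply/injectiveP.
    have [T [sbT Tim cT]] := ext3 (subset_trans Hsub Hs) Hs3 im3.
    have [x hx] := hit_of_cert Hcp Hz Hr npos Hc' sbT.
    have TTr : T \in Tr by rewrite inE cT eqxx /=; apply/asboolP; exists x.
    by exists T; rewrite /Q TTr inE.
  apply: (@leq_trans (\sum_T (if T \in Tr then (8 * j) * (8 * j) * (8 * j) * n ^ ((8 * j) - 3) else 0))%N).
    apply: leq_sum => T _; rewrite /Q; case: ifP => TTr; last by rewrite cards0.
    by apply: tri_bound; move: TTr; rewrite inE => /andP[/eqP].
  by rewrite -big_mkcond /= sum_nat_const.
have Hfin : (n ^ 3 <= 2 * (8 * j) ^ 3 * #|Tr|)%N.
  have eX : X = (n ^ 3 * n ^ ((8 * j) - 3))%N by rewrite -expnD subnKC.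
  have hp : (0 < n ^ ((8 * j) - 3))%N by rewrite expn_gt0 npos.
  rewrite -(leq_pmul2r hp) -eX.
  apply: (leq_trans HG); apply: (leq_trans (leq_mul (leqnn 2) HGT)).
  rewrite (_ : (8 * j) ^ 3 = (8 * j) * (8 * j) * (8 * j))%N; last by rewrite !expnS expn0 muln1 mulnA.
  by apply: eq_leq; ring.
rewrite fmorphV rmorph_nat.
rewrite ler_pdivrMl ?ltr0n // -natrX -natrM ler_nat.
exact: Hfin.
Qed.
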